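(* Let $g,h:\mathbb R\to\mathbb R$ be Borel functions and let $\mathcal R_{g,h}$ be the set of all products $\varrho_1\times\varrho_2$ of Borel probability measures on $\mathbb R$ with respect to which $g$ and $h$ are weakly comonotonic. Let $\mathcal R_{\rm c}=\{\delta_x\times\delta_{x'}:x,x'\in\mathbb R\}$ and $\mathcal R_{\rm a}=\{\delta_x\times\delta_x:x\in\mathbb R\}$. Then: (i) $\mathcal R_{g,h}\supseteq\mathcal R_{\rm c}$ if and only if $g$ and $h$ are strongly comonotonic; (ii) $\mathcal R_{g,h}=\mathcal R_{\rm a}$ if and only if $g$ and $h$ are strongly antimonotonic and injective on $\mathbb R$.
   Context: $\delta_x$ denotes the point mass at $x$. Functions $g,h$ are weakly comonotonic with respect to a product measure $\varrho_1\times\varrho_2$ on $(\mathbb R^2,\mathcal B(\mathbb R)\otimes\mathcal B(\mathbb R))$ if the integral $\iint_{\mathbb R^2}(g(x)-g(x'))(h(x)-h(x'))\,\varrho_1(\mathrm dx)\varrho_2(\mathrm dx')$ exists and is $\ge0$. $g$ and $h$ are strongly comonotonic if $(g(x)-g(x'))(h(x)-h(x'))\ge0$ for all $x,x'\in\mathbb R$, and strongly antimonotonic if $(g(x)-g(x'))(h(x)-h(x'))\le0$ for all $x,x'\in\mathbb R$. *)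

(* Defs.v *)
From HB Require Import structures.
From mathcomp Require Import all_boot all_order all_algebra.
From mathcomp Require Import all_classical all_reals all_analysis measurable_realfun.
Set Implicit Arguments. Unset Strict Implicit. Unset Printing Implicit Defensive.
Import Order.TTheory GRing.Theory Num.Theory.
Local Open Scope classical_set_scope.
Local Open Scope ring_scope.

Section defs.
Variable R : realType.

Definition cmf (g h : R -> R) (z : R * R) : \bar R :=
  ((g z.1 - g z.2) * (h z.1 - h z.2))%:E.

Definition integral_exists (mu : set (R * R) -> \bar R) (f : R * R -> \bar R) :=
  measurable_fun [set: R * R] f /\
  ((\int[mu]_z (f^\+ z) < +oo)%E \/ (\int[mu]_z (f^\- z) < +oo)%E).

Definition weakly_comonotonic (g h : R -> R) (mu : set (R * R) -> \bar R) :=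
  integral_exists mu (cmf g h) /\ (0 <= \int[mu]_z cmf g h z)%E.

Definition strongly_comonotonic (g h : R -> R) :=
  forall x x', 0 <= (g x - g x') * (h x - h x').

Definition strongly_antimonotonic (g h : R -> R) :=
  forall x x', (g x - g x') * (h x - h x') <= 0.

Definition meas_eq (P Q : set (R * R) -> \bar R) :=
  forall A, measurable A -> P A = Q A.

Definition in_Rgh (g h : R -> R) (P : set (R * R) -> \bar R) :=
  exists (r1 r2 : probability R R),
    meas_eq P (r1 \x r2)%E /\ weakly_comonotonic g h (r1 \x r2)%E.

Definition in_Rc (P : set (R * R) -> \bar R) :=
  exists x x' : R, meas_eq P ((\d_x : set R -> \bar R) \x (\d_x' : set R -> \bar R))%E.

Definition in_Ra (P : set (R * R) -> \bar R) :=
  exists x : R, meas_eq P ((\d_x : set R -> \bar R) \x (\d_x : set R -> \bar R))%E.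

End defs.

(* Main.v *)
Require Import Defs.
From HB Require Import structures.
From mathcomp Require Import all_boot all_order all_algebra.
From mathcomp Require Import all_classical all_reals all_analysis measurable_realfun.
Import Order.TTheory GRing.Theory Num.Theory.
Local Open Scope classical_set_scope.
Local Open Scope ring_scope.

Section helpers.
Variable R : realType.
Local Open Scope ereal_scope.

Lemma dirac_prod (x x' : R) (A : set (R * R)) : measurable A ->
  ((\d_x : set R -> \bar R) \x (\d_x' : set R -> \bar R)) A = \d_(x, x') A.
Proof.
move=> mA; rewrite /product_measure1 integral_dirac//; last first.
  exact: (measurable_fun_xsection (\d_x' : {sigma_finite_measure set R -> \bar R})).
by rewrite diracT mul1e /= !diracE mem_xsection.
Qed.

Lemma cmf_meas (g h : R -> R) : measurable_fun setT g -> measurable_fun setT h ->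
  measurable_fun setT (cmf g h).
Proof.
move=> mg mh; apply/measurable_EFinP; apply: measurable_funM; apply: measurable_funB.
- exact: measurableT_comp mg measurable_fst.
- exact: measurableT_comp mg measurable_snd.
- exact: measurableT_comp mh measurable_fst.
- exact: measurableT_comp mh measurable_snd.
Qed.

Arguments cmf_meas {g h}.

Lemma int_dirac_pair (mu : {measure set (R * R) -> \bar R}) (x x' : R)
  (f : R * R -> \bar R) : measurable_fun setT f ->
  meas_eq mu \d_(x, x') -> \int[mu]_z f z = f (x, x').
Proof.
move=> mf me; rewrite (@eq_measure_integral _ _ _ _ \d_(x, x')); last first.
  by move=> A mA _; exact: me.
by rewrite integral_dirac// diracT mul1e.
Qed.


Arguments int_dirac_pair {mu x x' f}.

Lemma key1 (g h : R -> R) (mg : measurable_fun setT g) (mh : measurable_fun setT h)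
  (P : set (R * R) -> \bar R) (x x' : R) :
  meas_eq P ((\d_x : set R -> \bar R) \x (\d_x' : set R -> \bar R)) ->
  (in_Rgh g h P <-> (0 <= (g x - g x') * (h x - h x'))%R).
Proof.
move=> hP; split.
  case=> r1 [r2 [me [_ H]]].
  have me2 : meas_eq (r1 \x r2) \d_(x, x').
    by move=> A mA; rewrite -me// hP// dirac_prod.
  by move: H; rewrite (int_dirac_pair (cmf_meas mg mh) me2) lee_fin.
move=> H; exists \d_x, \d_x'; split => //.
have me2 : meas_eq ((\d_x : probability R R) \x (\d_x' : probability R R)) \d_(x, x').
  by move=> A mA; rewrite dirac_prod.
split; last by rewrite (int_dirac_pair (cmf_meas mg mh) me2) lee_fin.
split; first exact: cmf_meas.
left; rewrite (int_dirac_pair _ me2) ?ltry//.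
  by rewrite funeposE /cmf gt_max !ltry.
exact: measurable_funepos (cmf_meas mg mh).
Qed.


Lemma point_mass (r : probability R R) (x0 : R) : r (~` [set x0]) = 0 ->
  forall A, measurable A -> r A = \d_x0 A.
Proof.
move=> h0 A mA; rewrite diracE; have [x0A|x0A] := boolP (x0 \in A).
  have nA0 : r (~` A) = 0.
    apply/eqP; rewrite -measure_le0 -h0 le_measure ?inE//.
    - by apply: measurableC.
    - by apply: measurableC; exact: measurable_set1.
    by move=> y nAy yx0; apply: nAy; rewrite yx0; exact: set_mem.
  rewrite -(probability_setT r) -(setvU A) measureU ?setICl//; last exact: measurableC.
  by rewrite -[X in X = _]add0r; congr (_ + _); rewrite -nA0.
apply/eqP; rewrite /= -measure_le0 -h0 le_measure ?inE//.
- by apply: measurableC; exact: measurable_set1.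
by move=> y Ay yx0; move: x0A; rewrite -yx0 mem_set.
Qed.


Arguments point_mass {r x0}.

Lemma rgh_point (g h : R -> R)
  (anti : forall x x', x <> x' -> ((g x - g x') * (h x - h x') < 0)%R)
  (r1 r2 : probability R R) :
  weakly_comonotonic g h (r1 \x r2) ->
  exists x0, r1 (~` [set x0]) = 0 /\ r2 (~` [set x0]) = 0.
Proof.
move=> [[mf _] H0].
have cle z : cmf g h z <= 0.
  case: z => a b; rewrite /cmf /= lee_fin.
  have [->|ab] := eqVneq a b; first by rewrite subrr mul0r.
  by apply/ltW/anti/eqP.
have ip0 : \int[r1 \x r2]_z ((cmf g h)^\+ z) = 0.
  by apply: integral0_eq => z _; apply: (le0_funeposE (D := setT)) => //; rewrite in_setT.
have in0 : \int[r1 \x r2]_z ((cmf g h)^\- z) = 0.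
  apply/le_anti/andP; split; last by apply: integral_ge0 => z _; exact: funeneg_ge0.
  by move: H0; rewrite integralE ip0 sub0e oppe_ge0.
have ia0 : \int[r1 \x r2]_z `|cmf g h z| = 0.
  rewrite -in0; apply: eq_integral => z _.
  by rewrite lee0_abs// (le0_funenegE (D := setT)) // in_setT.
have := (ae_eq_integral_abs (r1 \x r2) measurableT mf).1 ia0.
case=> N [mN muN sN].
have off a b : a <> b -> N (a, b).
  move=> ab; apply: sN => /= /(_ I); rewrite /cmf /= => -[] /eqP.
  by move/eqP => e; move: (anti _ _ ab); rewrite e ltxx.
have muN' := muN.
rewrite /product_measure1 /= in muN.
have mphi := measurable_fun_xsection r2 mN.
have ib0 : \int[r1]_x `|(r2 \o xsection N) x| = 0.
  by rewrite -muN; apply: eq_integral => x _; rewrite gee0_abs.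
have := (ae_eq_integral_abs r1 measurableT mphi).1 ib0.
case=> N1 [mN1 muN1 sN1].
have [x0 nx0] : exists x0, ~ N1 x0.
  apply: contrapT => hn.
  have : r1 setT <= r1 N1.
    by apply: le_measure; rewrite ?inE// => x _; apply: contrapT => nx; apply: hn; exists x.
  by rewrite muN1 probability_setT lee_fin ler10.
have phi0 : r2 (xsection N x0) = 0.
  by apply: contrapT => hn; apply: nx0; apply: sN1 => /= /(_ I).
have h2 : r2 (~` [set x0]) = 0.
  apply/le_anti/andP; split; last exact: measure_ge0.
  rewrite -phi0 le_measure ?inE//.
  - by apply: measurableC; exact: measurable_set1.
  - exact: measurable_xsection.
  by move=> y /= yx0; rewrite /xsection /= mem_set//; apply: off => e; apply: yx0.
exists x0; split => //.
have mC : measurable (~` [set x0]) by apply: measurableC; exact: measurable_set1.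
have : (r1 \x r2) (~` [set x0] `*` [set x0]) <= (r1 \x r2) N.
  apply: le_measure; rewrite ?inE//; first exact: measurableX.
  by case=> a b [/= ax0 ->]; apply: off.
rewrite muN' product_measure1E//.
rewrite [X in _ * X <= _ -> _](_ : _ = 1) ?mule1; last first.
  apply: etrans (point_mass h2 _ (measurable_set1 x0)) _.
  by rewrite diracE mem_set.
move=> hle.
by apply/le_anti/andP; split; last exact: measure_ge0.
Qed.


Lemma prod_point (r1 r2 : probability R R) (x0 : R) :
  r1 (~` [set x0]) = 0 -> r2 (~` [set x0]) = 0 ->
  forall A, measurable A -> (r1 \x r2) A = \d_(x0, x0) A.
Proof.
move=> h1 h2 A mA; rewrite /product_measure1.
rewrite (eq_measure_integral (\d_x0 : {measure set R -> \bar R})); last first.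
  by move=> B mB _; exact: point_mass h1 _ mB.
rewrite integral_dirac//; last exact: (measurable_fun_xsection r2 mA).
rewrite diracT mul1e /=.
apply: etrans (point_mass h2 _ (measurable_xsection _ mA)) _.
by rewrite !diracE mem_xsection.
Qed.

End helpers.

Arguments key1 {R g h} mg mh {P x x'}.
Arguments rgh_point {R g h} anti {r1 r2}.
Arguments prod_point {R r1 r2 x0}.

Theorem theorem4p1 (R : realType) (g h : R -> R)
  (mg : measurable_fun setT g) (mh : measurable_fun setT h) :
  ((forall P : set (R * R) -> \bar R, in_Rc P -> in_Rgh g h P) <->
     strongly_comonotonic g h) /\
  ((forall P : set (R * R) -> \bar R, in_Rgh g h P <-> in_Ra P) <->
     strongly_antimonotonic g h /\ injective g /\ injective h).
Proof.
split.
  split.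
    move=> H x x'; apply: (key1 mg mh (P := ((\d_x : set R -> \bar R) \x (\d_x' : set R -> \bar R))%E) (fun A mA => erefl)).1.
    by apply: H; exists x, x'.
  by move=> H P [x [x' hP]]; apply/(key1 mg mh hP).2/H.
split.
  move=> H.
  have neg x x' : x <> x' -> ((g x - g x') * (h x - h x') < 0)%R.
    move=> xx'; rewrite ltNge; apply/negP => c.
    have : in_Rgh g h ((\d_x : set R -> \bar R) \x (\d_x' : set R -> \bar R))%E.
      exact/(key1 mg mh (fun A mA => erefl)).2.
    move/H => [y hy].
    have m1 : measurable ([set x] `*` [set x']).
      by apply: measurableX; exact: measurable_set1.
    move: (hy _ m1); rewrite !dirac_prod// !diracE.
    rewrite mem_set//; case: (boolP ((y, y) \in _)) => [/set_mem [/= yx yx'] _|_ /eqP].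
      by apply: xx'; rewrite -yx.
    by rewrite eqe /= oner_eq0.
  split.
    move=> x x'; have [<-|xx'] := eqVneq x x'; first by rewrite subrr mul0r.
    by apply/ltW/neg/eqP.
  split.
    move=> x x' e; apply: contrapT => ne; move: (neg _ _ ne).
    by rewrite e subrr mul0r ltxx.
  move=> x x' e; apply: contrapT => ne; move: (neg _ _ ne).
  by rewrite e subrr mulr0 ltxx.
move=> [anti [ig ih]] P.
have neg x x' : x <> x' -> ((g x - g x') * (h x - h x') < 0)%R.
  move=> xx'; rewrite lt_neqAle anti andbT mulf_eq0 negb_or !subr_eq0.
  by apply/andP; split; apply/eqP => e; apply: xx'; [exact: ig|exact: ih].
split.
  case=> r1 [r2 [me wc]]; have [x0 [h1 h2]] := rgh_point neg wc.
  by exists x0 => A mA; rewrite me// (prod_point h1 h2)// dirac_prod.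
case=> x hP; apply/(key1 mg mh hP).2.
by rewrite subrr mul0r.
Qed.
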